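(* Consider the multi-queue bandit under Q-ThS(match) as described in the context. For every $u\in[U]$ and every $t\ge1$, almost surely $$Q_u(t)-Q^*_u(t)\le\sum_{l=t-B_u(t)+1}^{t}\left(\mathsf E(l)+\sum_{k\ne k^*_u}\mathsf I_{uk}(l)\right),$$ where $B_u(t)=\min\{s\ge0:Q_u(t-s)=0\}$.
   Context: Discrete-time system with $U$ queues and $K$ servers, $1\le U\le K$. Arrivals $A_u(t)\in\{0,1\}$ to queue $u$ are Bernoulli($\lambda_u$), and the service $R_{uk}(t)\in\{0,1\}$ of server $k$ to queue $u$ is Bernoulli($\mu_{uk}$); all mutually independent and i.i.d. across slots. Each slot a matching is scheduled; $\kappa_u(t)$ is the server assigned to queue $u$, $S_u(t)=R_{u\kappa_u(t)}(t)$, $Q_u(t)=(Q_u(t-1)+A_u(t)-S_u(t))^+$. For each $u$, $k^*_u$ is the unique maximizer of $\mu_{uk}$ over $k$ (distinct across queues). The genie queue is $Q^*_u(t)=(Q^*_u(t-1)+A_u(t)-R_{uk^*_u}(t))^+$ with the same arrivals and services; $Q^*_u(0)\ge0$. $B_u(t)$ is the time elapsed since queue $u$ was last empty (time $t-B_u(t)$ is the last instant at or before $t$ with $Q_u=0$). Algorithm Q-ThS(match): at each time $l$ an independent Bernoulli exploration indicator $\mathsf E(l)$ (mean $\min\{1,3K\log^2l/l\}$) decides whether a matching is scheduled by exploration ($\mathsf E(l)=1$: uniformly random from a fixed set of $K$ matchings covering all pairs) or by exploitation (Thompson sampling with Beta posteriors, projected onto matchings). $\mathsf I_{uk}(l)$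 is the indicator that server $k$ is assigned to queue $u$ at time $l$ in an exploit step. *)

(* Defs.v *)
From HB Require Import structures.
From mathcomp Require Import all_boot all_order all_algebra.
Set Implicit Arguments. Unset Strict Implicit. Unset Printing Implicit Defensive.
Import Order.TTheory GRing.Theory Num.Theory.

(* One sample path of the system. Time slots are nat; slot 0 holds the
   initial conditions, slots l >= 1 are the scheduling slots.
   Queues are 'I_U, servers are 'I_K. *)

(* Real queue recursion: Q_u(l) = (Q_u(l-1) + A_u(l) - R_{u kappa_u(l)}(l))^+ ;
   truncated nat subtraction realizes (.)^+. *)
Definition real_queue U K (A : nat -> 'I_U -> bool) (R : nat -> 'I_U -> 'I_K -> bool)
  (kappa : nat -> 'I_U -> 'I_K) (Q : nat -> 'I_U -> nat) : Prop :=
  forall u l, 0 < l -> Q l u = (Q l.-1 u + A l u - R l u (kappa l u))%N.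

Definition genie_queue U K (A : nat -> 'I_U -> bool) (R : nat -> 'I_U -> 'I_K -> bool)
  (kstar : 'I_U -> 'I_K) (Qs : nat -> 'I_U -> nat) : Prop :=
  forall u l, 0 < l -> Qs l u = (Qs l.-1 u + A l u - R l u (kstar u))%N.

Definition Iexploit U K (E : nat -> bool) (kappa : nat -> 'I_U -> 'I_K)
  (u : 'I_U) (k : 'I_K) (l : nat) : bool :=
  ~~ E l && (kappa l u == k).

(* Main.v *)
Require Import Defs.
From HB Require Import structures.
From mathcomp Require Import all_boot all_order all_algebra.
From mathcomp Require Import zify.
Import Order.TTheory GRing.Theory Num.Theory.

Theorem lemma3
  (Rt : realFieldType) (U K : nat) (hU : (1 <= U)%N) (hUK : (U <= K)%N)
  (mu : 'I_U -> 'I_K -> Rt) (kstar : 'I_U -> 'I_K)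
  (hkstar : forall u k, k != kstar u -> (mu u k < mu u (kstar u))%R)
  (hkstar_inj : injective kstar)
  (A : nat -> 'I_U -> bool) (R : nat -> 'I_U -> 'I_K -> bool)
  (E : nat -> bool)
  (M : 'I_K -> 'I_U -> 'I_K)
  (hM_match : forall j, injective (M j))
  (hM_cover : forall u k, exists j, M j u = k)
  (kappa : nat -> 'I_U -> 'I_K)
  (hkappa_match : forall l, injective (kappa l))
  (hkappa_explore : forall l, E l -> exists j, kappa l = M j)
  (Q Qs : nat -> 'I_U -> nat)
  (hQ : real_queue A R kappa Q)
  (hQs : genie_queue A R kstar Qs)
  (u : 'I_U) (t : nat) (ht : (1 <= t)%N)
  (B : nat) (hB_le : (B <= t)%N) (hB_zero : Q (t - B)%N u = 0%N)
  (hB_min : forall s, (s < B)%N -> Q (t - s)%N u <> 0%N) :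
  ((Q t u)%:Z - (Qs t u)%:Z <=
    (\sum_(t - B + 1 <= l < t + 1)
       (E l + \sum_(k : 'I_K | k != kstar u) Iexploit E kappa u k l))%N%:Z)%R.
Proof.
set c := fun l => (E l + \sum_(k : 'I_K | k != kstar u) Iexploit E kappa u k l)%N.
set s0 := (t - B)%N.
have step : forall l, (0 < l)%N -> (Q l u <= Qs l u + (Q l.-1 u - Qs l.-1 u) + c l)%N.
  move=> l hl.
  rewrite (hQ u l hl) (hQs u l hl).
  have hR1 : forall b : bool, (b <= 1)%N by case.
  have := hR1 (R l u (kappa l u)); have := hR1 (R l u (kstar u)); have := hR1 (A l u).
  rewrite /c; case hE: (E l) => /=.
  - move: (A l u) (R l u (kstar u)) (R l u (kappa l u)) (\sum_(k < K | k != kstar u) Iexploit E kappa u k l) => a r1 r2 S; case: a; case: r1; case: r2 => /=; lia.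
  - case: (eqVneq (kappa l u) (kstar u)) => hk.
    + rewrite hk; lia.
    + have : (1 <= \sum_(k : 'I_K | k != kstar u) Iexploit E kappa u k l)%N.
        rewrite (bigD1 (kappa l u)) //= /Iexploit hE eqxx /=; lia.
      move: (A l u) (R l u (kstar u)) (R l u (kappa l u)) (\sum_(k < K | k != kstar u) Iexploit E kappa u k l) => a r1 r2 S; case: a; case: r1; case: r2 => /=; lia.
have main : forall n, (Q (s0 + n) u <= Qs (s0 + n) u + \sum_(s0 + 1 <= l < s0 + n + 1) c l)%N.
  elim=> [|n IH].
    rewrite addn0 hB_zero; lia.
  have hpos : (0 < s0 + n.+1)%N by rewrite addnS.
  have := step _ hpos.
  have e1 : (s0 + n.+1 + 1 = (s0 + n + 1).+1)%N by lia.
  have e2 : (s0 + n.+1 = s0 + n + 1)%N by lia.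
  rewrite e1 big_nat_recr /=; last by lia.
  rewrite -e2 /= => H.
  move: IH; rewrite e2.
  move: (\sum_(s0 + 1 <= i < s0 + n + 1) c i) => S.
  rewrite -e2 /= in H *.
  rewrite addnS /= -addnS in H.
  lia.
have := main B.
rewrite /s0 subnK // /c.
move: (\sum_(t - B + 1 <= l < t + 1) (E l + \sum_(k < K | k != kstar u) Iexploit E kappa u k l))%N => S H.
rewrite lerBlDr -PoszD lez_nat addnC; exact: H.
Qed.
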